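(* Consider the heteroscedastic linear model $y(i,k)=\tau_i+\mu+\mathbf g^T(k)\beta+\varepsilon(i,k)$ with treatments $i\in\{1,\ldots,v_1\}$, covariate indices $k\in\{1,\ldots,d\}$, known regressors $\mathbf g(k)\in\mathbb R^{v_2}$, uncorrelated errors with mean zero and $\mathrm{Var}(\varepsilon(i,k))=\sigma^2/\lambda_i$ where $\lambda_1,\ldots,\lambda_{v_1}>0$ are known. Let $w=(w_1,\ldots,w_{v_1})$ be a marginal treatment design with $w_i>0$ for all $i$, and let $\alpha=(\alpha_1,\ldots,\alpha_d)$ be a marginal covariate design feasible for $\mathbf K^T\beta$, i.e. $\mathcal C(\mathbf K)\subseteq\mathcal C(\mathbf S(\alpha))$. Then the product design $\xi=w\otimes\alpha$ (i.e. $\xi(i,k)=w_i\alpha_k$) is feasible for $\mathbf A^T\theta$, and its information matrix is $$\mathbf N_{\mathbf A}(w\otimes\alpha)=\begin{bmatrix}\mathbf N_{\mathbf Q_1}(w) & \mathbf 0\\ \mathbf 0 & \big(\sum_{i=1}^{v_1}\lambda_i w_i\big)\mathbf N_{\mathbf K}(\alpha)\end{bmatrix}.$$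
   Context: Write $\theta=(\tau^T,\mu,\beta^T)^T$ with $\tau=(\tau_1,\ldots,\tau_{v_1})^T$, $\beta\in\mathbb R^{v_2}$, $\mathbf h(k)=(1,\mathbf g^T(k))^T$ and $\mathbf f(i,k)=(\mathbf e_i^T,1,\mathbf g^T(k))^T$. A design $\xi$ is a nonnegative function on $\{1,\ldots,v_1\}\times\{1,\ldots,d\}$ with $\sum_{i,k}\xi(i,k)=1$; its moment matrix is $\mathbf M(\xi)=\sum_{i,k}\xi(i,k)\lambda_i\mathbf f(i,k)\mathbf f^T(i,k)$. Let $\mathbf Q_1\in\mathbb R^{v_1\times s_1}$ have full column rank, satisfy $\mathbf Q_1^T\mathbf 1_{v_1}=\mathbf 0$, and have no zero row; let $\mathbf K\in\mathbb R^{v_2\times s_2}$ have full column rank; let $\mathbf Q_2=(\mathbf 0_{s_2},\mathbf K^T)^T\in\mathbb R^{(v_2+1)\times s_2}$ and $\mathbf A=\mathrm{diag}(\mathbf Q_1,\mathbf Q_2)$. A design $\xi$ is feasible for $\mathbf A^T\theta$ if $\mathcal C(\mathbf A)\subseteq\mathcal C(\mathbf M(\xi))$, and then $\mathbf N_{\mathbf A}(\xi)=(\mathbf A^T\mathbf M^-(\xi)\mathbf A)^{-1}$ (any generalized inverse). A marginal treatment design $w$ is a vector of nonnegative weights $w_1,\ldots,w_{v_1}$ summing to one; $\mathbf M_1(w)=\mathrm{diag}(\lambda_1w_1,\ldots,\lambda_{v_1}w_{v_1})$ and, for $w>0$, $\mathbf N_{\mathbf Q_1}(w)=(\mathbf Q_1^T\mathbf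 M_1^{-1}(w)\mathbf Q_1)^{-1}$. A marginal covariate design $\alpha$ is a vector of nonnegative weights $\alpha_1,\ldots,\alpha_d$ summing to one; $\mathbf S(\alpha)=\sum_k\alpha_k\mathbf g(k)\mathbf g^T(k)-(\sum_k\alpha_k\mathbf g(k))(\sum_k\alpha_k\mathbf g(k))^T$, and for feasible $\alpha$, $\mathbf N_{\mathbf K}(\alpha)=(\mathbf K^T\mathbf S^-(\alpha)\mathbf K)^{-1}$. *)

(* Defs.v *)
From HB Require Import structures.
From mathcomp Require Import all_boot all_order all_algebra.
Set Implicit Arguments. Unset Strict Implicit. Unset Printing Implicit Defensive.
Import Order.TTheory GRing.Theory Num.Theory.
Local Open Scope ring_scope.

Section Defs.
Variables (R : realFieldType) (v1 d v2 : nat).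

(* f(i,k) = (e_i^T, 1, g^T(k))^T, theta = (tau, mu, beta) in R^(v1 + (1 + v2)) *)
Definition fvec (g : 'I_d -> 'cV[R]_v2) (i : 'I_v1) (k : 'I_d)
  : 'cV[R]_(v1 + (1 + v2)) :=
  col_mx (delta_mx i 0) (col_mx (1 : 'cV[R]_1) (g k)).

Definition Mxi (lam : 'I_v1 -> R) (g : 'I_d -> 'cV[R]_v2)
  (xi : 'I_v1 -> 'I_d -> R) : 'M[R]_(v1 + (1 + v2)) :=
  \sum_(i < v1) \sum_(k < d) (xi i k * lam i) *: (fvec g i k *m (fvec g i k)^T).

Definition prod_design (w : 'I_v1 -> R) (alpha : 'I_d -> R) : 'I_v1 -> 'I_d -> R :=
  fun i k => w i * alpha k.

Definition M1 (lam w : 'I_v1 -> R) : 'M[R]_v1 := diag_mx (\row_i (lam i * w i)).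

Definition NQ1 (s1 : nat) (Q1 : 'M[R]_(v1, s1)) (lam w : 'I_v1 -> R) : 'M[R]_s1 :=
  invmx (Q1^T *m invmx (M1 lam w) *m Q1).

Definition Smat (g : 'I_d -> 'cV[R]_v2) (alpha : 'I_d -> R) : 'M[R]_v2 :=
  \sum_(k < d) alpha k *: (g k *m (g k)^T)
  - (\sum_(k < d) alpha k *: g k) *m (\sum_(k < d) alpha k *: g k)^T.

Definition Amat (s1 s2 : nat) (Q1 : 'M[R]_(v1, s1)) (K : 'M[R]_(v2, s2))
  : 'M[R]_(v1 + (1 + v2), s1 + s2) :=
  block_mx Q1 0 0 (col_mx (0 : 'M[R]_(1, s2)) K).

End Defs.

Definition is_ginv (R : comNzRingType) (n : nat) (M G : 'M[R]_n) : Prop :=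
  M *m G *m M = M.

Definition colincl (F : fieldType) (n p q : nat) (A : 'M[F]_(n, p)) (B : 'M[F]_(n, q))
  : bool := (A^T <= B^T)%MS.

(* Main.v *)
Require Import Defs.
From HB Require Import structures.
From mathcomp Require Import all_boot all_order all_algebra.
Import Order.TTheory GRing.Theory Num.Theory.
Local Open Scope ring_scope.

Section Helpers.
Variable R : realFieldType.

Lemma sum_col_mx (I : Type) (r : seq I) (P : pred I) m1 m2 n
  (A : I -> 'M[R]_(m1, n)) (B : I -> 'M[R]_(m2, n)) :
  \sum_(i <- r | P i) col_mx (A i) (B i) =
  col_mx (\sum_(i <- r | P i) A i) (\sum_(i <- r | P i) B i).
Proof.
elim: r => [|x r IH]; first by rewrite !big_nil col_mx0.
rewrite !big_cons; case: (P x) => //; by rewrite IH add_col_mx.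
Qed.

Lemma sum_row_mx (I : Type) (r : seq I) (P : pred I) m n1 n2
  (A : I -> 'M[R]_(m, n1)) (B : I -> 'M[R]_(m, n2)) :
  \sum_(i <- r | P i) row_mx (A i) (B i) =
  row_mx (\sum_(i <- r | P i) A i) (\sum_(i <- r | P i) B i).
Proof.
elim: r => [|x r IH]; first by rewrite !big_nil row_mx0.
rewrite !big_cons; case: (P x) => //; by rewrite IH add_row_mx.
Qed.

Lemma sum_block_mx (I : Type) (r : seq I) (P : pred I) m1 m2 n1 n2
  (A : I -> 'M[R]_(m1, n1)) (B : I -> 'M[R]_(m1, n2))
  (C : I -> 'M[R]_(m2, n1)) (D : I -> 'M[R]_(m2, n2)) :
  \sum_(i <- r | P i) block_mx (A i) (B i) (C i) (D i) =
  block_mx (\sum_(i <- r | P i) A i) (\sum_(i <- r | P i) B i)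
           (\sum_(i <- r | P i) C i) (\sum_(i <- r | P i) D i).
Proof. by rewrite /block_mx sum_col_mx !sum_row_mx. Qed.

Lemma sum_sep m n p v1 d (c : 'I_v1 -> R) (a : 'I_d -> R)
  (U : 'I_v1 -> 'M[R]_(m, n)) (V : 'I_d -> 'M[R]_(n, p)) :
  \sum_(i < v1) \sum_(k < d) (c i * a k) *: (U i *m V k) =
  (\sum_(i < v1) c i *: U i) *m (\sum_(k < d) a k *: V k).
Proof.
rewrite mulmx_suml; apply: eq_bigr => i _; rewrite mulmx_sumr.
apply: eq_bigr => k _; by rewrite -scalemxAl -scalemxAr scalerA.
Qed.

Lemma sum_sep' m n p v1 d (c : 'I_v1 -> R) (a : 'I_d -> R)
  (U : 'I_v1 -> 'M[R]_(n, p)) (V : 'I_d -> 'M[R]_(m, n)) :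
  \sum_(i < v1) \sum_(k < d) (c i * a k) *: (V k *m U i) =
  (\sum_(k < d) a k *: V k) *m (\sum_(i < v1) c i *: U i).
Proof.
rewrite mulmx_sumr; apply: eq_bigr => i _; rewrite mulmx_suml.
apply: eq_bigr => k _; by rewrite -scalemxAl -scalemxAr scalerA mulrC.
Qed.

Lemma unit_of_inj n (P : 'M[R]_n) :
  (forall x : 'rV_n, x *m P = 0 -> x = 0) -> P \in unitmx.
Proof. by move=> H; rewrite -row_free_unit; apply: inj_row_free. Qed.

Lemma invmx_right n (A B : 'M[R]_n) : A *m B = 1%:M -> invmx A = B.
Proof.
move=> AB; have [Au _] := mulmx1_unit AB.
by rewrite -[invmx A]mulmx1 -AB mulmxA mulVmx // mul1mx.
Qed.

Lemma quad1 n (v : 'cV[R]_n) (u : 'rV[R]_n) :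
  (u *m (v *m (v)^T) *m u^T) 0 0 = (u *m v) 0 0 * (u *m v) 0 0.
Proof.
rewrite !mulmxA -mulmxA -[u^T]trmxK -trmx_mul.
rewrite mxE big_ord1 trmxK [X in _ * X]mxE.
by rewrite (_ : ord0 = 0).
Qed.

Lemma quad0 n m (a : 'I_m -> R) (v : 'I_m -> 'cV[R]_n) (u : 'rV[R]_n) :
  (forall k, 0 <= a k) ->
  u *m (\sum_k a k *: (v k *m (v k)^T)) *m u^T = 0 ->
  forall k, a k * (u *m v k) 0 0 = 0.
Proof.
move=> a0 H k.
have E : (u *m (\sum_k a k *: (v k *m (v k)^T)) *m u^T) 0 0 =
   \sum_k a k * ((u *m v k) 0 0 * (u *m v k) 0 0).
  rewrite mulmx_sumr mulmx_suml summxE; apply: eq_bigr => j _.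
  rewrite -scalemxAr -scalemxAl mxE; congr (_ * _).
  exact: quad1.
move: E; rewrite H mxE => /esym /psumr_eq0P => h.
have := h (fun j _ => mulr_ge0 (a0 j) (sqr_ge0 _)) k isT.
rewrite mulrA => /eqP; rewrite mulf_eq0 => /orP [/eqP//|].
by move=> /eqP ->; rewrite mulr0.
Qed.

End Helpers.


Section H3.
Variable R : realFieldType.

Lemma diag_inv n (c : 'I_n -> R) : (forall i, c i != 0) ->
  diag_mx (\row_i c i) *m diag_mx (\row_i (c i)^-1) = 1%:M.
Proof.
move=> c0; apply/matrixP => i j; rewrite mul_mx_diag !mxE.
case: eqP => [->|_]; last by rewrite mulr0n mul0r.
by rewrite !mulr1n divff.
Qed.

Lemma trsum n m d (a : 'I_d -> R) (v : 'I_d -> 'M[R]_(n, m)) :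
  (\sum_k a k *: v k)^T = \sum_k a k *: (v k)^T.
Proof. rewrite linear_sum; apply: eq_bigr => k _; by rewrite linearZ. Qed.

Lemma Smat_sym v2 d (g : 'I_d -> 'cV[R]_v2) alpha : (Smat g alpha)^T = Smat g alpha.
Proof.
rewrite /Smat linearB /= trmx_mul trmxK trsum; congr (_ - _).
apply: eq_bigr => k _; by rewrite trmx_mul trmxK.
Qed.

Lemma Smat_dec v2 d (g : 'I_d -> 'cV[R]_v2) alpha : \sum_k alpha k = 1 ->
  Smat g alpha = \sum_k alpha k *: ((g k - \sum_j alpha j *: g j) *m
                                   (g k - \sum_j alpha j *: g j)^T).
Proof.
move=> a1; set gb := \sum_j alpha j *: g j.
have E : forall k, (g k - gb) *m (g k - gb)^T =
   g k *m (g k)^T - (g k *m gb^T + gb *m (g k)^T) + gb *m gb^T.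
  move=> k; rewrite linearB /= mulmxBl !mulmxBr.
  by rewrite opprB opprD !addrA addrAC.
symmetry; under eq_bigr => k _ do rewrite E scalerDr scalerBr scalerDr.
rewrite big_split sumrB big_split /=.
have e1 : \sum_(i < d) alpha i *: (g i *m gb^T) = gb *m gb^T.
  by rewrite /gb mulmx_suml; apply: eq_bigr => i _; rewrite scalemxAl.
have e2 : \sum_(i < d) alpha i *: (gb *m (g i)^T) = gb *m gb^T.
  by rewrite [in RHS]/gb trsum mulmx_sumr; apply: eq_bigr => i _; rewrite scalemxAr.
rewrite e1 e2 -scaler_suml a1 scale1r /Smat -/gb.
by rewrite opprD addrA subrK.
Qed.
End H3.


Section H4.
Variable R : realFieldType.

Lemma Mxi_sym v1 d v2 lam (g : 'I_d -> 'cV[R]_v2) (xi : 'I_v1 -> 'I_d -> R) :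
  (Mxi lam g xi)^T = Mxi lam g xi.
Proof.
rewrite /Mxi linear_sum; apply: eq_bigr => i _.
rewrite linear_sum; apply: eq_bigr => k _.
by rewrite linearZ /= trmx_mul trmxK.
Qed.

Lemma sum_k1 d m n (c : R) (a : 'I_d -> R) (B : 'M[R]_(m, n)) :
  \sum_k a k = 1 -> \sum_(k < d) (c * a k) *: B = c *: B.
Proof.
move=> a1; under eq_bigr => k _ do rewrite mulrC -scalerA.
by rewrite -scaler_suml a1 scale1r.
Qed.

Lemma MX v1 d v2 s1 s2 lam (g : 'I_d -> 'cV[R]_v2) (w : 'I_v1 -> R) alpha
   (Q1 : 'M[R]_(v1, s1)) (K : 'M[R]_(v2, s2)) (Y : 'M[R]_(v2, s2)) :
  (forall i, lam i * w i != 0) -> \sum_k alpha k = 1 ->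
  \sum_i lam i * w i != 0 ->
  (const_mx 1 : 'rV[R]_v1) *m Q1 = 0 ->
  K = Smat g alpha *m Y ->
  Mxi lam g (prod_design w alpha) *m
    block_mx (invmx (M1 lam w) *m Q1) 0 0
      (col_mx (- ((\sum_k alpha k *: g k)^T *m ((\sum_i lam i * w i)^-1 *: Y)))
              ((\sum_i lam i * w i)^-1 *: Y))
  = Amat Q1 K.
Proof.
move=> c0 a1 L0 Q1c KSY.
set c := fun i => lam i * w i.
set L := \sum_i lam i * w i.
set gb := \sum_k alpha k *: g k.
set Z := L^-1 *: Y.
set X11 := invmx (M1 lam w) *m Q1.
set r := fun k => (g k)^T *m Z - gb^T *m Z.
have Dinv : invmx (M1 lam w) = diag_mx (\row_i (c i)^-1).
  apply: invmx_right; rewrite /M1 -(@diag_inv _ _ c c0); congr (_ *m _).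

have E : forall (i : 'I_v1) (k : 'I_d), (w i * alpha k * lam i) *: (fvec g i k *m (fvec g i k)^T)
   *m block_mx X11 0 0 (col_mx (- (gb^T *m Z)) Z) =
   (c i * alpha k) *: block_mx ((delta_mx i 0 : 'cV_v1) *m (delta_mx 0 i *m X11))
        ((delta_mx i 0 : 'cV_v1) *m r k)
        (col_mx (1 : 'cV_1) (g k) *m (delta_mx 0 i *m X11))
        (col_mx (1 : 'cV_1) (g k) *m r k).
  move=> i k; rewrite -scalemxAl -mulmxA /fvec tr_col_mx tr_col_mx trmx_delta trmx1.
  rewrite mul_row_block !mulmx0 addr0 add0r mul_row_col mul1mx.
  rewrite mul_col_row; congr (_ *: _); first by rewrite /c mulrAC [w i * _]mulrC.
  by rewrite /r [_ + (g k)^T *m Z]addrC.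
rewrite /Mxi /prod_design mulmx_suml.
under eq_bigr => i _ do rewrite mulmx_suml.
under eq_bigr => i _ do (under eq_bigr => k _ do rewrite E scale_block_mx; rewrite sum_block_mx).
rewrite sum_block_mx /Amat.
have sr : \sum_k alpha k *: r k = 0.
  rewrite /r; under eq_bigr => k _ do rewrite scalerBr.
  rewrite sumrB -scaler_suml a1 scale1r /gb trsum mulmx_suml.
  apply/eqP; rewrite subr_eq0; apply/eqP; apply: eq_bigr => k _; by rewrite scalemxAl.
have MD : M1 lam w *m invmx (M1 lam w) = 1%:M.
  rewrite Dinv /M1 -(@diag_inv _ _ c c0); congr (_ *m _).
have rowc : \sum_i c i *: (delta_mx 0 i : 'rV_v1) = const_mx 1 *m M1 lam w.
  rewrite [RHS]row_sum_delta; apply: eq_bigr => i _.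
  by rewrite /M1 mul_mx_diag !mxE mul1r.
congr block_mx.
- under eq_bigr => i _ do rewrite sum_k1 // mulmxA scalemxAl mul_delta_mx.
  rewrite -mulmx_suml.
  have -> : \sum_i c i *: (delta_mx i i : 'M_v1) = M1 lam w.
    by rewrite /M1 diag_mx_sum_delta; apply: eq_bigr => i _; rewrite mxE.
  by rewrite /X11 mulmxA MD mul1mx.
- by rewrite (@sum_sep R _ _ _ _ _ c alpha (fun i => delta_mx i 0) r) sr mulmx0.
- rewrite (@sum_sep' R _ _ _ _ _ c alpha (fun i => delta_mx 0 i *m X11) (fun k => col_mx 1 (g k))).
  have -> : \sum_i c i *: ((delta_mx 0 i : 'rV_v1) *m X11) = 0.
    under eq_bigr => i _ do rewrite scalemxAl.
    by rewrite -mulmx_suml rowc /X11 !mulmxA -(mulmxA _ (M1 lam w)) MD mulmx1 Q1c.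
  by rewrite mulmx0.
- under eq_bigr => i _ do (under eq_bigr => k _ do rewrite -scalerA; rewrite -scaler_sumr).
  rewrite -scaler_suml.
  rewrite [X in _ *: X](eq_bigr (fun k => col_mx (alpha k *: r k) (alpha k *: (g k *m r k)))); last first.
    by move=> k _; rewrite mul_col_mx mul1mx scale_col_mx.
  rewrite sum_col_mx scale_col_mx.
  rewrite sr scaler0; congr col_mx.
  have -> : \sum_k alpha k *: (g k *m r k) = Smat g alpha *m Z.
    rewrite /Smat mulmxBl /r; under eq_bigr => k _ do rewrite mulmxBr scalerBr.
    rewrite sumrB; congr (_ - _).
      rewrite mulmx_suml; apply: eq_bigr => k _; by rewrite -scalemxAl -mulmxA.
    rewrite -mulmxA mulmx_suml; apply: eq_bigr => k _; by rewrite -scalemxAl.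
  by rewrite /Z -scalemxAr scalerA divff // scale1r KSY.
Qed.
End H4.


Section H5.
Variable R : realFieldType.

Lemma unitN1 v1 s1 (Q1 : 'M[R]_(v1, s1)) (c : 'I_v1 -> R) :
  (forall i, 0 < c i) -> \rank Q1 = s1 ->
  Q1^T *m diag_mx (\row_i (c i)^-1) *m Q1 \in unitmx.
Proof.
move=> c0 rQ; apply: unit_of_inj => x Hx.
have Hq : x *m (Q1^T *m diag_mx (\row_i (c i)^-1) *m Q1) *m x^T = 0.
  by rewrite Hx mul0mx.
have N1E : Q1^T *m diag_mx (\row_i (c i)^-1) *m Q1 =
   \sum_i (c i)^-1 *: ((Q1^T *m (delta_mx i 0 : 'cV_v1)) *m (Q1^T *m (delta_mx i 0 : 'cV_v1))^T).
  rewrite diag_mx_sum_delta mulmx_sumr mulmx_suml; apply: eq_bigr => i _.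
  rewrite mxE -scalemxAr -scalemxAl trmx_mul trmxK trmx_delta.
  by rewrite !mulmxA -(mulmxA _ (delta_mx i 0)) mul_delta_mx.
rewrite N1E in Hq.
have h := @quad0 R _ _ (fun i => (c i)^-1) _ x
   (fun i => (eq_ind_r is_true (ltW (c0 i : 0 < c i)) (invr_ge0 (c i)))) Hq.
have xQ : x *m Q1^T = 0.
  apply/matrixP => a j; rewrite (ord1 a) [RHS]mxE.
  have := h j; rewrite mulmxA -colE => /eqP; rewrite mulf_eq0 invr_eq0.
  rewrite (gt_eqF (c0 j)) /= => /eqP; by rewrite mxE.
apply/eqP; rewrite -(mulmx_free_eq0 _ (B := Q1^T)) ?xQ //.
by rewrite /row_free mxrank_tr rQ.
Qed.

Lemma unitP2 v2 d s2 (g : 'I_d -> 'cV[R]_v2) alpha (K Y : 'M[R]_(v2, s2)) :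
  (forall k, 0 <= alpha k) -> \sum_k alpha k = 1 -> \rank K = s2 ->
  K = Smat g alpha *m Y -> Y^T *m K \in unitmx.
Proof.
move=> a0 a1 rK KSY; apply: unit_of_inj => x Hx.
set gb := \sum_j alpha j *: g j.
set u := fun k => g k - gb.
have SE : Smat g alpha = \sum_k alpha k *: (u k *m (u k)^T) by rewrite Smat_dec.
have P2E : Y^T *m K = \sum_k alpha k *: ((Y^T *m u k) *m (Y^T *m u k)^T).
  rewrite KSY SE mulmxA mulmx_sumr mulmx_suml; apply: eq_bigr => k _.
  rewrite -scalemxAr -scalemxAl trmx_mul.
  by rewrite !mulmxA trmxK.
have Hq : x *m (Y^T *m K) *m x^T = 0 by rewrite Hx mul0mx.
rewrite P2E in Hq.
have h := @quad0 R _ _ alpha _ x a0 Hq.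
have xK : x *m K^T = 0.
  rewrite KSY trmx_mul Smat_sym SE !mulmx_sumr big1 // => k _.
  rewrite -!scalemxAr !mulmxA (mx11_scalar (x *m Y^T *m u k)) mul_scalar_mx.
  by rewrite scalerA -mulmxA h scale0r.
apply/eqP; rewrite -(mulmx_free_eq0 _ (B := K^T)) ?xK //.
by rewrite /row_free mxrank_tr rK.
Qed.
End H5.


Theorem proposition1 (R : realFieldType) (v1 d v2 s1 s2 : nat)
  (lam : 'I_v1 -> R) (g : 'I_d -> 'cV[R]_v2)
  (Q1 : 'M[R]_(v1, s1)) (K : 'M[R]_(v2, s2))
  (w : 'I_v1 -> R) (alpha : 'I_d -> R) :
  (forall i, 0 < lam i) ->
  \rank Q1 = s1 ->
  (const_mx 1 : 'rV[R]_v1) *m Q1 = 0 ->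
  (forall i, row i Q1 != 0) ->
  \rank K = s2 ->
  (forall i, 0 < w i) -> \sum_(i < v1) w i = 1 ->
  (forall k, 0 <= alpha k) -> \sum_(k < d) alpha k = 1 ->
  colincl K (Smat g alpha) ->
  colincl (Amat Q1 K) (Mxi lam g (prod_design w alpha)) /\
  (forall (G : 'M[R]_(v1 + (1 + v2))) (H : 'M[R]_v2),
     is_ginv (Mxi lam g (prod_design w alpha)) G ->
     is_ginv (Smat g alpha) H ->
     ((Amat Q1 K)^T *m G *m Amat Q1 K \in unitmx) /\
     (K^T *m H *m K \in unitmx) /\
     invmx ((Amat Q1 K)^T *m G *m Amat Q1 K) =
       block_mx (NQ1 Q1 lam w) 0
                0 ((\sum_(i < v1) lam i * w i) *: invmx (K^T *m H *m K))).
Proof.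
move=> lam0 rQ1 Q1c _ rK w0 w1 a0 a1 Kin.
have cpos : forall i, 0 < lam i * w i by move=> i; apply: mulr_gt0.
have c0 : forall i, lam i * w i != 0 by move=> i; rewrite gt_eqF.
have L0 : \sum_i lam i * w i != 0.
  apply/negP => /eqP /psumr_eq0P H0.
  have : \sum_(i < v1) w i = 0.
    apply: big1 => i _; have := H0 (fun i _ => ltW (cpos i)) i isT.
    by move/eqP; rewrite mulf_eq0 (gt_eqF (lam0 i)) /= => /eqP.
  by rewrite w1 => /eqP; rewrite oner_eq0.
move: Kin; rewrite /colincl => /submxP [D' HD].
have KSY : K = Smat g alpha *m D'^T.
  by rewrite -[K]trmxK HD trmx_mul trmxK.
set Y := D'^T.
set c := fun i => lam i * w i.
set L := \sum_i lam i * w i.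
set gb := \sum_k alpha k *: g k.
set Z := L^-1 *: Y.
set X11 := invmx (M1 lam w) *m Q1.
set X := block_mx X11 0 0 (col_mx (- (gb^T *m Z)) Z).
have MXA : Mxi lam g (prod_design w alpha) *m X = Amat Q1 K.
  exact: MX.
have Dinv : invmx (M1 lam w) = diag_mx (\row_i (c i)^-1).
  apply: invmx_right; rewrite /M1 -(@diag_inv _ _ c c0); congr (_ *m _).
split.
  by rewrite -MXA trmx_mul Mxi_sym; exact: submxMl.
move=> G H HG HH.
set M := Mxi lam g (prod_design w alpha).
have AGA : (Amat Q1 K)^T *m G *m Amat Q1 K = X^T *m Amat Q1 K.
  rewrite -MXA trmx_mul Mxi_sym -/M.
  have -> : X^T *m M *m G *m (M *m X) = X^T *m (M *m G *m M) *m X.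
    by rewrite !mulmxA.
  by rewrite HG mulmxA.
set N1 := Q1^T *m invmx (M1 lam w) *m Q1.
set P2 := Y^T *m K.
have XA : X^T *m Amat Q1 K = block_mx N1 0 0 (L^-1 *: P2).
  rewrite /Amat /X tr_block_mx !trmx0 mulmx_block !mulmx0 !mul0mx !addr0 !add0r.
  rewrite tr_col_mx mul_row_col mulmx0 add0r /X11 trmx_mul trmx_inv.
  rewrite /N1 /P2 /Z linearZ /= -scalemxAl.
  by rewrite /M1 tr_diag_mx.
have KHK : K^T *m H *m K = P2.
  rewrite /P2 {1}KSY trmx_mul Smat_sym.
  have -> : Y^T *m Smat g alpha *m H *m K = Y^T *m (Smat g alpha *m H *m Smat g alpha) *m Y.
    by rewrite KSY !mulmxA.
  by rewrite HH KSY mulmxA.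
have U1 : N1 \in unitmx.
  by rewrite /N1 Dinv; apply: unitN1.
have U2 : P2 \in unitmx.
  exact: (@unitP2 R _ _ _ g alpha K Y a0 a1 rK KSY).
have BB : block_mx N1 0 0 (L^-1 *: P2) *m block_mx (invmx N1) 0 0 (L *: invmx P2) = 1%:M.
  rewrite mulmx_block !mulmx0 !mul0mx !addr0 !add0r mulmxV //.
  rewrite -scalemxAl -scalemxAr scalerA mulVf // scale1r mulmxV //.
  by rewrite -scalar_mx_block.
rewrite AGA XA KHK.
have [UB _] := mulmx1_unit BB.
split => //; split => //.
by rewrite (@invmx_right R _ _ _ BB).
Qed.
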